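(* Run the mechanism BFM-SWM described in the context with arbitrary $B>0$, $\alpha>1$, $\beta>1$, $\epsilon>0$, $\ell\in\{1,2\}$, with all sellers behaving truthfully, and let $M$, $\rho_M$, $S^*$ be as defined in the context. If $M\ge 2$, then $$\rho_M\ \le\ 2\alpha\big(v(S^* )-p(S^* )\big).$$
   Context: Setting. $\mathcal{N}$ is a finite set of $n$ sellers. The valuation $v:2^{\mathcal{N}}\to\mathbb{R}_{\ge 0}$ satisfies $v(\emptyset)=0$ and is submodular (for $X\subseteq Y\subseteq\mathcal{N}$ and $u\notin Y$, $v(u\mid Y)\le v(u\mid X)$), not necessarily monotone, where $v(S\mid T)=v(S\cup T)-v(T)$, $v(u\mid T)=v(\{u\}\mid T)$. Each seller $u$ has a private cost $c(u)\ge 0$; $c(X)=\sum_{u\in X}c(u)$, $p(X)=\sum_{u\in X}p(u)$. $B>0$ is the budget, $[\ell]=\{1,\dots,\ell\}$. Sellers behave truthfully: a seller $u$ offered price $q$ accepts iff $c(u)\le q$. Mechanism BFM-SWM (inputs $B$, $\alpha>1$, $\beta>1$, $\epsilon>0$, $\ell\in\{1,2\}$): 1. Offer every seller the price $B$; let $R$ be the set of sellers who accept, and set $p(u)=B$ for $u\in R$. 2. Set $t=0$, $\rho_0=\epsilon/\alpha$, $u^*=\emptyset$ ($u^*$ is a set of at most one seller), and $S_{i,0}=\emptyset$ for $i\in[\ell]$. 3. Repeat rounds: set $t\leftarrow t+1$, $\rho_t=\alpha\rho_{t-1}$, $S_{i,t}=\emptyset$ for all $i\in[\ell]$. Process the sellers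 $u\in R\setminus(\bigcup_{i=1}^{\ell}S_{i,t-1}\cup u^* )$ one at a time in a fixed order. For each such $u$: pick $j\in\arg\max_{i\in[\ell]}v(u\mid S_{i,t})$ (current contents); update $p(u)\leftarrow\min\{p(u),\ v(u\mid S_{j,t})/(\beta+\rho_t/B)\}$ and offer $p(u)$ to $u$. If $u$ accepts: if $v(S_{j,t}\cup\{u\})-p(S_{j,t}\cup\{u\})>\rho_t$ (current prices), set $u^*\leftarrow\{u\}$ and end the round immediately; otherwise add $u$ to $S_{j,t}$. If $u$ rejects, remove $u$ from $R$. After the round, stop if $R\setminus\left(\bigcup_{i=1}^{\ell}(S_{i,t-1}\cup S_{i,t})\cup u^*\right)=\emptyset$; otherwise start another round. 4. Let $M$ be the final value of $t$ (the number of rounds). Output $S^*\in\arg\max_{A\in\{S_{i,t}: i\in[\ell],\ t\in\{M-1,M\}\}\cup\{u^*\}}\big(v(A)-p(A)\big)$, paying each $u\in S^*$ its current price $p(u)$; $p(S^* )$ is the total payment. *)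

(* Defs.v *)
From mathcomp Require Import all_boot all_order all_algebra.
Set Implicit Arguments. Unset Strict Implicit. Unset Printing Implicit Defensive.
Import Order.TTheory GRing.Theory Num.Theory.
Local Open Scope ring_scope.

Section Mech.
Variables (R : realFieldType) (T : finType).

Definition psum (p : T -> R) (A : {set T}) : R := \sum_(u in A) p u.

Definition marg (v : {set T} -> R) (S : {set T}) (u : T) : R := v (u |: S) - v S.

Definition submodular (v : {set T} -> R) : Prop :=
  forall (X Y : {set T}) (u : T), X \subset Y -> u \notin Y ->
    marg v Y u <= marg v X u.

Variables (v : {set T} -> R) (c : T -> R) (B alpha beta eps : R)
          (l : nat) (order : seq T) (tie : nat -> T -> bool).

Definition rho (t : nat) : R := eps / alpha * alpha ^+ t.

(* two sets S_1, S_2 exist iff l = 2 *)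
Definition two : bool := (l == 2)%N.

Record rstate := RState {
  rR : {set T};  rp : T -> R;  ru : {set T};
  rS1 : {set T}; rS2 : {set T}; rstop : bool }.

(* processing of one seller u in round t; ties in the argmax over [l]
   are broken by the arbitrary rule [tie t u] (true = choose index 2). *)
Definition process (t : nat) (s : rstate) (u : T) : rstate :=
  if rstop s then s else
  let g1 := marg v (rS1 s) u in
  let g2 := marg v (rS2 s) u in
  let j2 := two && ((g1 < g2) || ((g1 == g2) && tie t u)) in
  let Sj := if j2 then rS2 s else rS1 s in
  let gj := if j2 then g2 else g1 in
  let q := Order.min (rp s u) (gj / (beta + rho t / B)) in
  let p' := fun w => if w == u then q else rp s w in
  if c u <= q then
    if rho t < v (u |: Sj) - psum p' (u |: Sj)
    then RState (rR s) p' [set u] (rS1 s) (rS2 s) true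
    else if j2 then RState (rR s) p' (ru s) (rS1 s) (u |: rS2 s) false
         else RState (rR s) p' (ru s) (u |: rS1 s) (rS2 s) false
  else RState (rR s :\ u) p' (ru s) (rS1 s) (rS2 s) false.

(* global state after round t: R, prices, u*, S_{i,t-1}, S_{i,t} *)
Record mstate := MState {
  mR : {set T}; mp : T -> R; mu : {set T};
  mP1 : {set T}; mP2 : {set T}; mC1 : {set T}; mC2 : {set T} }.

Definition round (t : nat) (s : mstate) : mstate :=
  let L := [seq u <- order | (u \in mR s) && (u \notin mC1 s :|: mC2 s :|: mu s)] in
  let r := foldl (process t) (RState (mR s) (mp s) (mu s) set0 set0 false) L in
  MState (rR r) (rp r) (ru r) (mC1 s) (mC2 s) (rS1 r) (rS2 r).

Definition init_state : mstate :=
  MState [set u | c u <= B] (fun _ => B) set0 set0 set0 set0 set0.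

Fixpoint run (k : nat) : mstate :=
  match k with 0 => init_state | k'.+1 => round k'.+1 (run k') end.

Definition stops_after (k : nat) : bool :=
  let s := run k in mR s :\: (mP1 s :|: mP2 s :|: mC1 s :|: mC2 s :|: mu s) == set0.

Definition num_rounds (M : nat) : Prop :=
  (1 <= M)%N /\ stops_after M /\ forall k, (1 <= k < M)%N -> ~~ stops_after k.

Definition candidates (M : nat) : seq {set T} :=
  let s := run M in
  [:: mP1 s; mC1 s; mu s] ++ (if two then [:: mP2 s; mC2 s] else [::]).

Definition net (M : nat) (A : {set T}) : R := v A - psum (mp (run M)) A.

End Mech.

(* Main.v *)
Require Import Defs.
From mathcomp Require Import all_boot all_order all_algebra.
From mathcomp Require Import lra.
Import Order.TTheory GRing.Theory Num.Theory.
Local Open Scope ring_scope.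

Section Aux.
Variables (R : realFieldType) (T : finType) (v : {set T} -> R) (c : T -> R)
  (B alpha beta eps : R) (l : nat) (tie : nat -> T -> bool).

Local Notation proc := (process v c B alpha beta eps l tie).

Lemma fold_stop t s L : rstop s -> foldl (proc t) s L = s.
Proof.
move=> H; elim: L => //= u L IH.
have -> : proc t s u = s by rewrite /process H.
exact: IH.
Qed.

Definition Pst t (r : rstate R T) := exists u Sj,
  [/\ Sj = rS1 r \/ (two l && (Sj == rS2 r)), ru r = [set u] &
      rho alpha eps t < v (u |: Sj) - psum (rp r) (u |: Sj)].

Lemma process_P t s u : (rstop s -> Pst t s) -> rstop (proc t s u) -> Pst t (proc t s u).
Proof.
rewrite /process; case hs: (rstop s) => /=; first by move=> H _; apply: H.
move=> _.
case: ifP => _ //=; case: ifP => hr; last by case: ifP.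
move=> _.
set j2 := (two l && _) in hr *.
exists u, (if j2 then rS2 s else rS1 s); split => //.
case hj: j2; [right | by left].
by rewrite /= eqxx andbT; move: hj; rewrite /j2 => /andP[].
Qed.

Lemma fold_P t s L : (rstop s -> Pst t s) ->
  rstop (foldl (proc t) s L) -> Pst t (foldl (proc t) s L).
Proof.
elim: L s => //= u L IH s H; apply: IH; exact: process_P.
Qed.

Lemma process_nostop t s u : ~~ rstop s -> ~~ rstop (proc t s u) ->
  let s' := proc t s u in
  [/\ ru s' = ru s, (forall w, w != u -> rp s' w = rp s w), rR s' \subset rR s,
      (u \in rR s' -> u \in rS1 s' :|: rS2 s') &
      (rS1 s \subset rS1 s') && (rS2 s \subset rS2 s')].
Proof.
rewrite /process => /negbTE -> /=.
case: ifP => _ /=; last first.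
  move=> _; split => //=; first by move=> w /negbTE ->.
  - exact: subD1set.
  - by rewrite !inE eqxx.
  - by rewrite !subxx.
case: ifP => _ //= _.
case: ifP => _ /=; split => //=; try (by move=> w /negbTE ->);
  try (by rewrite subxx); try (by rewrite !inE eqxx ?orbT);
  by rewrite subxx ?subsetUr.
Qed.

Lemma fold_nostop t s L : let r := foldl (proc t) s L in ~~ rstop r ->
  ~~ rstop s /\ [/\ ru r = ru s, (forall w, w \notin L -> rp r w = rp s w),
      rR r \subset rR s, (forall w, w \in rR r -> w \in L -> w \in rS1 r :|: rS2 r) &
      (rS1 s \subset rS1 r) && (rS2 s \subset rS2 r)].
Proof.
elim: L s => [|u L IH] s /=.
  by move=> H; do 2 split => //; rewrite !subxx.
move=> Hr.
have Hs : ~~ rstop s.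
  apply/negP => Hs.
  have E : proc t s u = s by rewrite /process Hs.
  by move: Hr; rewrite E fold_stop // Hs.
have [h1 [h2 h3 h4 h5 h6]] := IH _ Hr.
have [e1 e2 e3 e4 /andP[e5 e6]] := @process_nostop t s u Hs h1.
move/andP: h6 => [h6 h7].
do 2 split => //.
- by rewrite h2.
- move=> w; rewrite inE negb_or => /andP[wu wL]; rewrite h3 // e2 //.
- exact: subset_trans e3.
- move=> w wR; rewrite inE => /orP[/eqP Ew|wL]; last exact: h5.
  rewrite Ew in wR *.
  have := e4 (subsetP h4 _ wR); rewrite !inE => /orP[H|H].
    by rewrite (subsetP h6 _ H).
  by rewrite (subsetP h7 _ H) orbT.
- by rewrite (subset_trans e5 h6) (subset_trans e6 h7).
Qed.

End Aux.
Lemma key (R : realFieldType) (T : finType) (v : {set T} -> R) (p : T -> R) S u x N :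
  v set0 = 0 -> submodular v -> 0 <= x ->
  x < v (u |: S) - psum p (u |: S) -> v S - psum p S <= N ->
  v [set u] - psum p [set u] <= N -> x <= 2 * N.
Proof.
move=> v0 sub x0 hx hS hu.
case: (boolP (u \in S)) => uS.
  have E : u |: S = S by apply/setUidPr; rewrite sub1set.
  rewrite E in hx; lra.
rewrite /psum big_setU1 //= in hx.
rewrite /psum big_set1 in hu.
have := sub set0 S u (sub0set S) uS.
rewrite /marg setU0 v0 subr0 => hm.
rewrite /psum in hS; lra.
Qed.

Section Main.
Variables (R : realFieldType) (T : finType) (v : {set T} -> R) (c : T -> R)
  (B alpha beta eps : R) (l : nat) (order : seq T) (tie : nat -> T -> bool).

Local Notation proc := (process v c B alpha beta eps l tie).
Local Notation run := (run v c B alpha beta eps l order tie).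
Local Notation round := (round v c B alpha beta eps l order tie).
Local Notation net := (net v c B alpha beta eps l order tie).
Local Notation cand := (candidates v c B alpha beta eps l order tie).

Definition Lof (s : mstate R T) :=
  [seq u <- order | (u \in mR s) && (u \notin mC1 s :|: mC2 s :|: mu s)].
Definition fin t (s : mstate R T) :=
  foldl (proc t) (RState (mR s) (mp s) (mu s) set0 set0 false) (Lof s).

Lemma roundE t s : round t s =
  MState (rR (fin t s)) (rp (fin t s)) (ru (fin t s)) (mC1 s) (mC2 s)
         (rS1 (fin t s)) (rS2 (fin t s)).
Proof. by []. Qed.

Lemma cand_C1 k : mC1 (run k) \in cand k.
Proof. by rewrite /candidates mem_cat !inE eqxx ?orbT. Qed.
Lemma cand_P1 k : mP1 (run k) \in cand k.
Proof. by rewrite /candidates mem_cat !inE eqxx ?orbT. Qed.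
Lemma cand_u k : mu (run k) \in cand k.
Proof. by rewrite /candidates mem_cat !inE eqxx ?orbT. Qed.
Lemma cand_C2 k : two l -> mC2 (run k) \in cand k.
Proof. by move=> h; rewrite /candidates h mem_cat !inE eqxx ?orbT. Qed.
Lemma cand_P2 k : two l -> mP2 (run k) \in cand k.
Proof. by move=> h; rewrite /candidates h mem_cat !inE eqxx ?orbT. Qed.

Lemma main_lemma m Sstar :
  v set0 = 0 -> submodular v -> 1 < alpha -> 0 < eps ->
  perm_eq order (enum T) ->
  ~~ stops_after v c B alpha beta eps l order tie m.+1 ->
  (forall A, A \in cand m.+2 -> net m.+2 A <= net m.+2 Sstar) ->
  rho alpha eps m.+2 <= 2 * alpha * net m.+2 Sstar.
Proof.
move=> v0 sub a1 e0 hperm nst Hc.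
set N := net m.+2 Sstar.
have rpos : forall k, 0 < rho alpha eps k.
  move=> k; rewrite /rho; apply: mulr_gt0; first by apply: divr_gt0 => //; lra.
  by apply: exprn_gt0; lra.
have rS : rho alpha eps m.+2 = alpha * rho alpha eps m.+1.
  by rewrite /rho exprS mulrCA.
set s1 := run m.+1.
have E2 : run m.+2 = round m.+2 s1 by [].
set r2 := fin m.+2 s1.
have fin_alpha : rho alpha eps m.+2 <= 2 * N -> rho alpha eps m.+2 <= 2 * alpha * N.
  move=> h; have := rpos m.+2; nra.
case: (boolP (rstop r2)) => st2.
  apply: fin_alpha.
  have [u [Sj [hS hu hr]]] := @fold_P R T v c B alpha beta eps l tie m.+2 (RState (mR s1) (mp s1) (mu s1) set0 set0 false) (Lof s1) (fun h => match notF h with end) st2.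
  apply: (@key R T v (mp (run m.+2)) Sj u _ N v0 sub); first by apply: ltW.
  - exact: hr.
  - apply: Hc; case: hS => [->|/andP[h2 /eqP ->]]; first exact: cand_C1.
    exact: cand_C2.
  - apply: Hc; have -> : [set u] = mu (run m.+2) by rewrite -hu.
    exact: cand_u.
have [_ [e1 e2 _ _ _]] := @fold_nostop R T v c B alpha beta eps l tie m.+2
   (RState (mR s1) (mp s1) (mu s1) set0 set0 false) (Lof s1) st2.
rewrite /= in e1 e2.
set s0 := run m.
set r1 := fin m.+1 s0.
case: (boolP (rstop r1)) => st1; last first.
  have [_ [f1 _ f3 f4 _]] := @fold_nostop R T v c B alpha beta eps l tie m.+1
     (RState (mR s0) (mp s0) (mu s0) set0 set0 false) (Lof s0) st1.
  rewrite /= in f1 f3.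
  case/negP: nst.
  change (mR s1 :\: (mP1 s1 :|: mP2 s1 :|: mC1 s1 :|: mC2 s1 :|: mu s1) == set0).
  have -> : mR s1 = rR r1 by [].
  have -> : mP1 s1 = mC1 s0 by [].
  have -> : mP2 s1 = mC2 s0 by [].
  have -> : mC1 s1 = rS1 r1 by [].
  have -> : mC2 s1 = rS2 r1 by [].
  have -> : mu s1 = mu s0 by rewrite -f1.
  apply/eqP/setP => w; rewrite in_set0.
  apply/negP; rewrite !inE => /andP[wU wR]; case/negP: wU.
  case wL: (w \in Lof s0).
    have := f4 w wR wL; rewrite !inE => /orP[->|->]; by rewrite !orbT.
  have wR0 : w \in mR s0 := subsetP f3 _ wR.
  move: wL; rewrite /Lof mem_filter (perm_mem hperm) mem_enum wR0 andbT /=.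
  move/negbFE; rewrite !inE.
  by case/orP => [/orP[->|->]|->]; rewrite ?orbT.
have [u [Sj [hS hu hr]]] := @fold_P R T v c B alpha beta eps l tie m.+1
   (RState (mR s0) (mp s0) (mu s0) set0 set0 false) (Lof s0)
   (fun h => match notF h with end) st1.
have ha : 0 < alpha by lra.
suff h : rho alpha eps m.+1 <= 2 * N by rewrite rS; nra.
have mu1 : mu s1 = [set u] by rewrite -hu.
apply: (@key R T v (mp (run m.+2)) Sj u _ N v0 sub); first exact: ltW.
- have -> : psum (mp (run m.+2)) (u |: Sj) = psum (rp r1) (u |: Sj).
    rewrite /psum; apply: eq_bigr => w wS.
    change (rp r2 w = mp s1 w); rewrite e2 //.
    rewrite /Lof mem_filter negb_and; apply/orP; left.
    rewrite negb_and negbK; apply/orP; right.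
    have -> : mC1 s1 = rS1 r1 by [].
    have -> : mC2 s1 = rS2 r1 by [].
    rewrite mu1 !inE.
    move: wS; rewrite !inE => /orP[->|wS]; first by rewrite orbT.
    case: hS => [E|/andP[_ /eqP E]]; rewrite -E wS ?orbT //.
  exact: hr.
- apply: Hc; case: hS => [->|/andP[h2 /eqP ->]]; first exact: cand_P1.
  exact: cand_P2.
- apply: Hc; have -> : [set u] = mu (run m.+2) by rewrite -mu1; symmetry; exact: e1.
  exact: cand_u.
Qed.
End Main.
Theorem lemma4p5 (R : realFieldType) (T : finType) (v : {set T} -> R) (c : T -> R)
  (B alpha beta eps : R) (l : nat) (order : seq T) (tie : nat -> T -> bool)
  (M : nat) (Sstar : {set T}) :
  v set0 = 0 -> (forall S, 0 <= v S) -> submodular v ->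
  (forall u, 0 <= c u) ->
  0 < B -> 1 < alpha -> 1 < beta -> 0 < eps ->
  (l = 1 \/ l = 2)%N ->
  perm_eq order (enum T) ->
  num_rounds v c B alpha beta eps l order tie M ->
  (2 <= M)%N ->
  Sstar \in candidates v c B alpha beta eps l order tie M ->
  (forall A, A \in candidates v c B alpha beta eps l order tie M ->
     net v c B alpha beta eps l order tie M A <= net v c B alpha beta eps l order tie M Sstar) ->
  rho alpha eps M <= 2 * alpha * net v c B alpha beta eps l order tie M Sstar.
Proof.
move=> v0 vpos sub cpos B0 a1 b1 e0 hl hperm [M1 [Mstop Mnot]] M2 Sin Smax.
case: M M1 Mstop Mnot M2 Sin Smax => [|[|m]] // M1 Mstop Mnot _ Sin Smax.
apply: main_lemma => //.
by apply: Mnot; rewrite ltnS leqnn.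
Qed.
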